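(* Let $a\in\mathbb{N}$ and $b,d\in\mathbb{Z}$. Suppose there is a prime $p$ with $v_p(a)>\max\{v_p(b),v_p(d)\}$ and $v_p(b)\neq v_p(d)$. Then there exists a completely multiplicative function $f:\mathbb{N}\to\mathbb{S}^1$ such that $$\liminf_{n\to\infty}|f(an+b)-f(an+d)|>0.$$
   Context: $\mathbb{N}=\{1,2,\dots\}$, $\mathbb{S}^1$ the unit circle; completely multiplicative means $f(mn)=f(m)f(n)$. $v_p$ is the $p$-adic valuation (with $v_p(0)=\infty$). The expression is considered for $n$ large enough that $an+b,an+d\ge1$. *)

(* Defs.v *)
From HB Require Import structures.
From mathcomp Require Import all_boot all_order all_algebra.
From mathcomp Require Import all_classical all_reals all_analysis.
From mathcomp Require Export complex.
Set Implicit Arguments. Unset Strict Implicit. Unset Printing Implicit Defensive.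
Import Order.TTheory GRing.Theory Num.Theory.
Local Open Scope ring_scope.

(* Completely multiplicative function N={1,2,...} -> S^1 (values in R[i]).
   f is represented as a function on nat; its value at 0 is irrelevant. *)
Definition cm_unimodular (R : realType) (f : nat -> R[i]) : Prop :=
  (forall m n : nat, (0 < m)%N -> (0 < n)%N -> f (m * n)%N = f m * f n) /\
  (forall n : nat, (0 < n)%N -> Normc.normc (f n) = 1).

(* Main.v *)
Require Import Defs.
From HB Require Import structures.
From mathcomp Require Import all_boot all_order all_algebra.
From mathcomp Require Import all_classical all_reals all_analysis.
From mathcomp Require Import complex.
Import Order.TTheory GRing.Theory Num.Theory.
Local Open Scope ring_scope.
Lemma valp (p a : nat) (x : int) (n : nat) : prime p -> (0 < a)%N -> x != 0 ->
  (logn p (absz x) < logn p a)%N ->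
  logn p (absz (a%:Z * n%:Z + x)) = logn p (absz x).
Proof.
move=> pp a0 x0 lt.
set e := logn p (absz x).
have x0' : (0 < absz x)%N by rewrite absz_gt0.
have dx : ((p ^ e)%:Z %| x)%Z by rewrite dvdzE /= pfactor_dvdnn.
have ndx : ~~ ((p ^ e.+1)%:Z %| x)%Z by rewrite dvdzE /= pfactor_dvdn // ltnn.
have da : ((p ^ e.+1)%:Z %| a%:Z)%Z by rewrite dvdzE /= pfactor_dvdn.
have dae : ((p ^ e)%:Z %| a%:Z)%Z by rewrite dvdzE /= pfactor_dvdn // ltnW.
set y := a%:Z * n%:Z + x.
have dy : ((p ^ e)%:Z %| y)%Z by rewrite rpredD // dvdz_mulr.
have ndy : ~~ ((p ^ e.+1)%:Z %| y)%Z.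
  apply: contra ndx => h.
  have -> : x = y - a%:Z * n%:Z by rewrite /y addrC addKr.
  by rewrite rpredB // dvdz_mulr.
have y0 : (0 < absz y)%N.
  rewrite absz_gt0; apply: contra ndy => /eqP ->; exact: dvdz0.
move: dy ndy; rewrite !dvdzE /= !pfactor_dvdn // => h1 h2.
apply/eqP; rewrite eqn_leq h1 andbT; by rewrite leqNgt.
Qed.

Lemma omega_ex (R : rcfType) (D : nat) : (0 < D)%N ->
  exists w : R[i], Normc.normc w = 1 /\ w ^+ D = -1.
Proof.
move=> D0; exists (D.-root (-1 : R[i])).
have hw : (D.-root (-1 : R[i])) ^+ D = -1 by rewrite rootCK.
split=> //.
have h1 : `|D.-root (-1 : R[i])| = 1.
  apply/eqP; rewrite -(pexpr_eq1 D0) // -normrX hw normrN normr1 //.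
have : ((Normc.normc (D.-root (-1 : R[i])))%:C)%C = 1 := h1.
by case.
Qed.

Lemma normc_ge0 (R : rcfType) (x : R[i]) : 0 <= Normc.normc x.
Proof. by case: x => a b; rewrite /Normc.normc sqrtr_ge0. Qed.

Lemma normcX (R : rcfType) (w : R[i]) k : Normc.normc w = 1 -> Normc.normc (w ^+ k) = 1.
Proof.
move=> h; elim: k => [|k IH]; first by rewrite expr0 Normc.normc1.
by rewrite exprS Normc.normcM h IH mul1r.
Qed.

Lemma neq_pow (R : rcfType) (w : R[i]) i j : Normc.normc w = 1 -> (i < j)%N ->
  w ^+ (j - i) = -1 -> w ^+ i != w ^+ j.
Proof.
move=> h ij hw; apply/eqP => E.
have : w ^+ j = - w ^+ i by rewrite -(subnK (ltnW ij)) exprD hw mulN1r.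
rewrite -E => /eqP; rewrite -addr_eq0 -mulr2n => /eqP.
move/(congr1 (@Normc.normc R)); rewrite normcMn normcX // Normc.normc0.
by move/eqP; rewrite pnatr_eq0.
Qed.

Theorem lemma4p3 (R : realType) (a : nat) (b d : int) (p : nat) :
  (0 < a)%N -> prime p -> b != 0 -> d != 0 ->
  (maxn (logn p (absz b)) (logn p (absz d)) < logn p a)%N ->
  logn p (absz b) != logn p (absz d) ->
  exists f : nat -> R[i], cm_unimodular f /\
    (0 < limn_einf (fun n : nat =>
       (Normc.normc (f (absz (a%:Z * n%:Z + b)) - f (absz (a%:Z * n%:Z + d))))%:E))%E.
Proof.
move=> a0 pp b0 d0 lt ne.
rewrite gtn_max in lt; case/andP: lt => ltb ltd.
set e := logn p (absz b); set e' := logn p (absz d).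
have [w [w1 hw] ] : exists w : R[i], Normc.normc w = 1 /\
    w ^+ e != w ^+ e'.
  case: (ltngtP e e') => [h|h|h]; last by move: h; rewrite /e /e' => /eqP; rewrite (negbTE ne).
  - have [|w [w1 hw]] := @omega_ex R (e' - e); first by rewrite subn_gt0.
    by exists w; split => //; apply: neq_pow.
  - have [|w [w1 hw]] := @omega_ex R (e - e'); first by rewrite subn_gt0.
    by exists w; split => //; rewrite eq_sym; apply: neq_pow.
exists (fun n => w ^+ logn p n); split.
  split; first by move=> m n m0 n0; rewrite lognM // exprD.
  by move=> n _; apply: normcX.
have -> : (fun n : nat => (Normc.normc (w ^+ logn p (absz (a%:Z * n%:Z + b))
    - w ^+ logn p (absz (a%:Z * n%:Z + d))))%:E)
    = (fun _ => (Normc.normc (w ^+ e - w ^+ e'))%:E).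
  by apply: funext => n; rewrite (@valp p a b n pp a0 b0 ltb) (@valp p a d n pp a0 d0 ltd).
rewrite (cvg_limn_einf_sup (cvg_cst _)).1 lte_fin lt_neqAle normc_ge0 andbT.
apply/eqP => /esym /Normc.eq0_normc /eqP; rewrite subr_eq0.
by apply/negP.
Qed.
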